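(* Let $(S,\mathscr{S})$ be a measurable space, $n\le N$, $g:S^n\to\mathbb{R}$ a function and $f:S^N\to\mathbb{R}$ a symmetric $\mathscr{S}^N$-measurable function. Then: (i) $\|U^N_ng\|\le\|g\|$; (ii) $U^{n_3}_{n_1}=U^{n_3}_{n_2}\circ U^{n_2}_{n_1}$ whenever $n_1\le n_2\le n_3$; (iii) $\|U^N_ng\|$ is nonincreasing in $N$ ($N\ge n$); (iv) $f$ is measurable with respect to the $\sigma$-algebra generated by the functions $U^N_n h$, where $h$ ranges over all measurable functions $S^n\to\mathbb{R}$.
   Context: $\|\cdot\|$ is the sup norm. A function on $S^k$ is symmetric if it is invariant under all permutations of its arguments. With $\mathfrak S[n,N]$ the set of injections $\{1,\ldots,n\}\to\{1,\ldots,N\}$ and $(N)_n=N(N-1)\cdots(N-n+1)$, $U^N_ng(x_1,\ldots,x_N)=\frac1{(N)_n}\sum_{\sigma\in\mathfrak S[n,N]}g(x_{\sigma(1)},\ldots,x_{\sigma(n)})$. *)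

(* Defs.v *)
From HB Require Import structures.
From mathcomp Require Import all_boot all_order all_algebra all_fingroup.
From mathcomp Require Import all_classical all_reals all_analysis.
Set Implicit Arguments. Unset Strict Implicit. Unset Printing Implicit Defensive.
Import Order.TTheory GRing.Theory Num.Theory.
Local Open Scope classical_set_scope.
Local Open Scope ring_scope.

(* S^n is modelled as n.-tuple S, which MathComp-Analysis equips with the
   product sigma-algebra (generated by the coordinate projections tnth). *)

Definition supnorm (R : realType) (T : Type) (g : T -> R) : \bar R :=
  ereal_sup [set (`|g x|)%:E | x in [set: T]].

Definition subtuple (S : Type) (n N : nat) (s : 'I_n -> 'I_N)
  (x : N.-tuple S) : n.-tuple S := [tuple tnth x (s i) | i < n].

(* U^N_n g (x_1..x_N) = 1/(N)_n * sum over injections s : [n] -> [N] of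
   g(x_{s 1},...,x_{s n});  (N)_n = N ^_ n is the falling factorial. *)
Definition Ustat (R : realType) (S : Type) (n N : nat)
  (g : n.-tuple S -> R) (x : N.-tuple S) : R :=
  (N ^_ n)%:R^-1 *
  \sum_(s : {ffun 'I_n -> 'I_N} | injectiveb s) g (subtuple s x).
Arguments Ustat {R S n} N g x.

Definition symmetric_fun (R : realType) (S : Type) (N : nat)
  (f : N.-tuple S -> R) : Prop :=
  forall (p : {perm 'I_N}) (x : N.-tuple S), f (subtuple p x) = f x.

Definition sigma_U (R : realType) (d : measure_display) (S : measurableType d)
  (n N : nat) : set (set (N.-tuple S)) :=
  <<s \bigcup_(h in [set h : n.-tuple S -> R | measurable_fun [set: n.-tuple S] h])
        preimage_set_system [set: N.-tuple S] (Ustat N h) measurable >>.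
Arguments sigma_U R {d} S n N.

(* Main.v *)
Require Import Defs.
From HB Require Import structures.
From mathcomp Require Import all_boot all_order all_algebra all_fingroup.
From mathcomp Require Import all_classical all_reals all_analysis.
From mathcomp Require Import primitive_action alt.
Import Order.TTheory GRing.Theory Num.Theory numFieldNormedType.Exports.
Local Open Scope classical_set_scope.
Local Open Scope ring_scope.
From mathcomp Require Import ring.
Set Implicit Arguments. Unset Strict Implicit. Unset Printing Implicit Defensive.

Lemma trans_inj n N (u v : 'I_n -> 'I_N) : injective u -> injective v ->
  exists s : {perm 'I_N}, forall i, s (u i) = v i.
Proof.
move=> iu iv.
have leN : (n <= #|'I_N|)%N by rewrite -[n]card_ord; apply: leq_card iu.
have tr := ntransitive_weak leN (@Sym_trans 'I_N).
have du : [tuple u i | i < n] \in n.-dtuple([set: 'I_N]%SET).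
  apply/dtuple_onP; split=> [i j|i]; last by rewrite inE.
  by rewrite !tnth_mktuple => /iu.
have dv : [tuple v i | i < n] \in n.-dtuple([set: 'I_N]%SET).
  apply/dtuple_onP; split=> [i j|i]; last by rewrite inE.
  by rewrite !tnth_mktuple => /iv.
have [a _ ea] := atransP2 tr du dv.
exists a => i.
have := congr1 (fun t => tnth t i) ea; rewrite tnth_mktuple => ->.
by rewrite /= /n_act tnth_map tnth_mktuple /= apermE.
Qed.

Definition fcomp n1 n2 n3 (s : {ffun 'I_n2 -> 'I_n3}) (t : {ffun 'I_n1 -> 'I_n2})
  : {ffun 'I_n1 -> 'I_n3} := [ffun i => s (t i)].

Lemma card_inj n N : #|[pred s : {ffun 'I_n -> 'I_N} | injectiveb s]| = (N ^_ n)%N.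
Proof.
have := card_inj_ffuns 'I_n 'I_N; rewrite !card_ord => <-.
apply: eq_card => s; rewrite !inE; reflexivity.
Qed.

Lemma injb_fcomp n1 n2 n3 (s : {ffun 'I_n2 -> 'I_n3}) (t : {ffun 'I_n1 -> 'I_n2}) :
  injectiveb s -> injectiveb t -> injectiveb (fcomp s t).
Proof.
move=> /injectiveP iS /injectiveP iT; apply/injectiveP => i j.
by rewrite !ffunE => /iS /iT.
Qed.

Lemma fiber_const (R : realType) n1 n2 n3 (t : {ffun 'I_n1 -> 'I_n2}) :
  injectiveb t -> exists K : nat, forall F : {ffun 'I_n1 -> 'I_n3} -> R,
  \sum_(s : {ffun 'I_n2 -> 'I_n3} | injectiveb s) F (fcomp s t) =
  K%:R * \sum_(u : {ffun 'I_n1 -> 'I_n3} | injectiveb u) F u.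
Proof.
move=> iT.
case: (pickP [pred u : {ffun 'I_n1 -> 'I_n3} | injectiveb u]) => [u0 iu0 | none];
  last first.
  exists 0%N => F; rewrite mul0r big_pred0 // => s.
  apply/negbTE/negP => iS; have := none (fcomp s t).
  by rewrite /= injb_fcomp.
exists #|[pred s : {ffun 'I_n2 -> 'I_n3} | injectiveb s && (fcomp s t == u0)]| => F.
rewrite (partition_big (fun s => fcomp s t) (fun u => injectiveb u)); last first.
  by move=> s iS; apply: injb_fcomp.
rewrite mulr_sumr; apply: eq_bigr => u iu.
rewrite (eq_bigr (fun _ => F u)); last by move=> s /andP[_ /eqP ->].
rewrite sumr_const mulr_natl; congr (_ *+ _).
have [sg esg] := trans_inj (injectiveP _ iu0) (injectiveP _ iu).
pose h (s : {ffun 'I_n2 -> 'I_n3}) : {ffun 'I_n2 -> 'I_n3} := [ffun j => sg (s j)].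
have hb : bijective h.
  pose h' (s : {ffun 'I_n2 -> 'I_n3}) : {ffun 'I_n2 -> 'I_n3} := [ffun j => (sg^-1)%g (s j)].
  exists h' => s; apply/ffunP => j;
  by rewrite !ffunE ?permK ?permKV.
rewrite -!sum1_card (reindex h (onW_bij _ hb)).
apply: eq_bigl => s /=.
rewrite !unfold_in /=.
have -> : injectiveb (h s) = injectiveb s.
  apply/injectiveP/injectiveP => iS i j.
    by move=> e; apply: iS; rewrite !ffunE e.
  by rewrite !ffunE => /perm_inj /iS.
case: (injectiveb s) => //=.
apply/eqP/eqP => [e|e]; apply/ffunP => i.
  have := congr1 (fun f : {ffun 'I_n1 -> 'I_n3} => f i) e.
  by rewrite /= !ffunE -esg => /perm_inj.
by rewrite !ffunE -esg -e ffunE.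
Qed.

Lemma sum_inj_const (R : realType) n N (c : R) :
  \sum_(s : {ffun 'I_n -> 'I_N} | injectiveb s) c = c * (N ^_ n)%:R.
Proof.
rewrite sumr_const -(card_inj n N) mulr_natr; congr (_ *+ _).
Qed.

Lemma fiber_sum (R : realType) n1 n2 n3 (t : {ffun 'I_n1 -> 'I_n2})
  (F : {ffun 'I_n1 -> 'I_n3} -> R) : (n1 <= n3)%N -> injectiveb t ->
  \sum_(s : {ffun 'I_n2 -> 'I_n3} | injectiveb s) F (fcomp s t) =
  (n3 ^_ n2)%:R / (n3 ^_ n1)%:R * \sum_(u : {ffun 'I_n1 -> 'I_n3} | injectiveb u) F u.
Proof.
move=> l13 iT; have [K HK] := fiber_const R n3 iT.
have := HK (fun _ => 1); rewrite !sum_inj_const !mul1r => ->.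
have nz : (n3 ^_ n1)%:R != 0 :> R by rewrite pnatr_eq0 -lt0n ffact_gt0.
by rewrite HK mulfK.
Qed.

Lemma subtupleK (S : Type) n1 n2 n3 (s : {ffun 'I_n2 -> 'I_n3}) (t : {ffun 'I_n1 -> 'I_n2})
  (x : n3.-tuple S) : subtuple t (subtuple s x) = subtuple (fcomp s t) x.
Proof. by apply: eq_from_tnth => i; rewrite !tnth_mktuple ffunE. Qed.

Lemma Ustat_comp (R : realType) (S : Type) n1 n2 n3 (h : n1.-tuple S -> R) :
  (n1 <= n2)%N -> (n2 <= n3)%N -> Ustat n3 h = Ustat n3 (Ustat n2 h).
Proof.
move=> l12 l23; apply: funext => x; rewrite /Ustat.
under [in RHS]eq_bigr => s _ do under eq_bigr => t _ do rewrite subtupleK.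
under [in RHS]eq_bigr => s _ do rewrite mulr_sumr.
rewrite [in RHS]exchange_big /=.
have l13 := leq_trans l12 l23.
rewrite [in RHS](eq_bigr (fun t => (n2 ^_ n1)%:R^-1 * ((n3 ^_ n2)%:R / (n3 ^_ n1)%:R *
   \sum_(u : {ffun 'I_n1 -> 'I_n3} | injectiveb u) h (subtuple u x)))); last first.
  by move=> t iT; rewrite -mulr_sumr (@fiber_sum R n1 n2 n3 t (fun u => h (subtuple u x))).

rewrite sum_inj_const.
have nz a b : (a <= b)%N -> (b ^_ a)%:R != 0 :> R by move=> ?; rewrite pnatr_eq0 -lt0n ffact_gt0.
have := nz _ _ l12; have := nz _ _ l23; have := nz _ _ l13.
move: (n2 ^_ n1)%:R (n3 ^_ n2)%:R (n3 ^_ n1)%:R => a b c ha hb hc.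
field.
by rewrite ha hb hc.
Qed.

Lemma Ustat_norm (R : realType) (S : Type) n N (g : n.-tuple S -> R) :
  (n <= N)%N -> (supnorm (Ustat N g) <= supnorm g)%E.
Proof.
move=> lnN; rewrite /supnorm; apply: ge_ereal_sup => _ [x _ <-].
set sg := ereal_sup _.
have ub y : ((`|g y|)%:E <= sg)%E by apply: ereal_sup_ubound; exists y.
pose s0 : {ffun 'I_n -> 'I_N} := [ffun i => widen_ord lnN i].
case E : sg => [M| |]; last 2 first.
- by rewrite leey.
- by have := ub (subtuple s0 x); rewrite E leeNy_eq.
have ubM y : `|g y| <= M by rewrite -lee_fin -E.
have cp : 0 < (N ^_ n)%:R :> R by rewrite ltr0n ffact_gt0.
rewrite lee_fin /Ustat normrM normfV normr_nat mulrC ler_pdivrMr //.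
apply: (le_trans (ler_norm_sum _ _ _)).
rewrite -sum_inj_const; exact: ler_sum.
Qed.

Section IV.
Context (R : realType) (d : measure_display) (S : measurableType d).

Lemma measurable_sum_pred d' (T' : measurableType d') (I : finType) (P : pred I)
  (F : I -> T' -> R) : (forall i, measurable_fun setT (F i)) ->
  measurable_fun setT (fun x => \sum_(i | P i) F i x).
Proof.
move=> mF; have -> : (fun x => \sum_(i | P i) F i x) =
   (fun x => \sum_(i <- [seq i <- index_enum I | P i]) F i x).
  by apply: funext => x; rewrite big_filter.
exact: measurable_sum.
Qed.

Lemma measurable_subtuple n N (s : 'I_n -> 'I_N) :
  measurable_fun [set: N.-tuple S] (subtuple s).
Proof.
apply/measurable_fun_tnthP => i.
rewrite (_ : _ \o _ = (fun x : N.-tuple S => tnth x (s i))).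
  exact: measurable_tnth.
by apply: funext => x; rewrite /= tnth_mktuple.
Qed.

Lemma measurable_Ustat n N (h : n.-tuple S -> R) : measurable_fun setT h ->
  measurable_fun [set: N.-tuple S] (Ustat N h).
Proof.
move=> mh; rewrite /Ustat; apply: measurable_realfun.measurable_funM => //.
apply: (@measurable_sum_pred _ (N.-tuple S) {ffun 'I_n -> 'I_N} (fun s => injectiveb s) (fun s x => h (subtuple s x))) => s.
exact: measurableT_comp mh (measurable_subtuple s).
Qed.

Definition GU (n N : nat) : set (set (N.-tuple S)) := \bigcup_(h in [set h : n.-tuple S -> R | measurable_fun [set: n.-tuple S] h])
        preimage_set_system [set: N.-tuple S] (Ustat N h) measurable.

Arguments GU : clear implicits.
Definition MT (n N : nat) := g_sigma_algebraType (GU n N).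




Lemma Ustat1E N (phi : S -> R) (x : N.-tuple S) : (0 < N)%N ->
  Ustat N (fun y : 1.-tuple S => phi (tnth y ord0)) x = N%:R^-1 * \sum_(i < N) phi (tnth x i).
Proof.
move=> N0; rewrite /Ustat ffactn1; congr (_ * _).
pose h (i : 'I_N) : {ffun 'I_1 -> 'I_N} := [ffun _ => i].
have hb : bijective h.
  exists (fun s : {ffun 'I_1 -> 'I_N} => s ord0) => [i|s]; first by rewrite ffunE.
  by apply/ffunP => j; rewrite !ffunE [j]ord1.
rewrite (reindex h (onW_bij _ hb)) /=.
apply: eq_big => [i|i _]; last by rewrite tnth_mktuple ffunE.
by apply/injectiveP => j k _; rewrite [j]ord1 [k]ord1.
Qed.

Lemma psi_meas n N (phi : S -> R) : (0 < n)%N -> (n <= N)%N ->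
  measurable_fun setT phi ->
  measurable_fun (T := MT n N) setT (fun x : N.-tuple S => \sum_(i < N) phi (tnth x i)).
Proof.
move=> n0 lnN mphi.
pose h1 : 1.-tuple S -> R := fun y => phi (tnth y ord0).
have mh1 : measurable_fun setT h1 := measurableT_comp mphi (measurable_tnth ord0).
have EU : Ustat N h1 = Ustat N (Ustat n h1) := Ustat_comp h1 n0 lnN.
have mU : measurable_fun (T := MT n N) setT (Ustat N h1).
  rewrite EU => _ Y mY; apply: sub_sigma_algebra.
  exists (Ustat n h1); first exact: measurable_Ustat.
  by exists Y.
have N0 : (0 < N)%N := leq_trans n0 lnN.
have -> : (fun x : N.-tuple S => \sum_(i < N) phi (tnth x i)) =
          (fun x => N%:R * Ustat N h1 x).
  apply: funext => x; rewrite Ustat1E // mulVKf //.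
  by rewrite pnatr_eq0 -lt0n.
exact: measurable_realfun.measurable_funM.
Qed.
End IV.

Lemma bigsetIE (T : Type) (I : finType) (F : I -> set T) :
  \big[setI/setT]_(j : I) F j = [set y | forall j, F j y].
Proof.
apply/seteqP; split => y.
  by move=> H j; move: H; rewrite (bigD1 j) //= => -[].
move=> H; apply: (big_ind (fun X : set T => X y)) => //.
Qed.

Lemma bigsetU_sub (T : Type) (I : finType) (P : pred I) (F : I -> set T) (Z : set T) :
  (forall j, P j -> F j `<=` Z) -> \big[setU/set0]_(j | P j) F j `<=` Z.
Proof.
move=> H; apply: (big_ind (fun X : set T => X `<=` Z)) => //.
by move=> X X' h1 h2 y [/h1|/h2].
Qed.

Section IV2.
Context (R : realType) (d : measure_display) (S : measurableType d).

Definition rect N (B : 'I_N -> set S) : set (N.-tuple S) := [set x | forall i, B i (tnth x i)].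
Definition cA N (A : set (N.-tuple S)) (x : N.-tuple S) : R :=
  \sum_(p : {perm 'I_N}) \1_A (subtuple p x).

Lemma rect_meas n N (B : 'I_N -> set S) : (0 < n)%N -> (n <= N)%N ->
  (forall i, measurable (B i)) -> measurable_fun (T := MT R S n N) setT (cA (rect B)).
Proof.
move=> n0 lnN mB.
pose v (y : S) : {ffun 'I_N -> bool} := [ffun j => `[< B j y >]].
pose V (x : N.-tuple S) := map_tuple v x.
pose Gc (t : N.-tuple {ffun 'I_N -> bool}) : R :=
  \sum_(p : {perm 'I_N}) ([forall j, tnth t (p j) j] : nat)%:R.
have c1 x : cA (rect B) x = Gc (V x).
  apply: eq_bigr => p _; rewrite indicE; congr ((nat_of_bool _)%:R).
  apply/idP/idP => [/set_mem H | /forallP H].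
    by apply/forallP => j; rewrite tnth_map ffunE; apply/asboolP; have := H j; rewrite tnth_mktuple.
  apply: mem_set => j; have := H j; rewrite tnth_map ffunE tnth_mktuple.
  by move/asboolP.
have c2 (t t' : N.-tuple {ffun 'I_N -> bool}) : perm_eq t t' -> Gc t = Gc t'.
  case/tuple_permP => q tq.
  have tE k : tnth t k = tnth t' (q k).
    have -> : t = [tuple tnth t' (q i) | i < N] by apply: val_inj; rewrite /= tq.
    by rewrite tnth_mktuple.
  rewrite /Gc [in RHS](reindex_inj (mulIg q)) /=.
  apply: eq_bigr => p _; congr ((nat_of_bool _)%:R).
  by apply: eq_forallb => j; rewrite tE permM.
pose Aw (w : {ffun 'I_N -> bool}) := [set y | v y = w].
have mAw w : measurable (Aw w).
  have -> : Aw w = \big[setI/setT]_(j : 'I_N) (if w j then B j else ~` B j).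
    rewrite bigsetIE; apply/seteqP; split => y /=.
      move=> <- j; rewrite ffunE; case: asboolP => //.
    move=> H; apply/ffunP => j; rewrite ffunE; have := H j.
    by case: (w j) => Hy; [exact: asboolT | exact: asboolF].
  by apply: bigsetI_measurable => j _; case: (w j) => //; apply: measurableC.
pose psi w (x : N.-tuple S) : R := \sum_(i < N) \1_(Aw w) (tnth x i).
have psiE w x : psi w x = (count_mem w (V x))%:R.
  rewrite /V /= count_map -sum1_count big_tuple natr_sum big_mkcond /=.
  apply: eq_bigr => i _; rewrite indicE.
  by case: ifPn => /= [/eqP H|H]; [rewrite mem_set|rewrite memNset //= => /eqP; apply/negP].
have mpsi w k : @measurable _ (MT R S n N) [set x | psi w x = k].
  have := @psi_meas R d S n N _ n0 lnN (@measurable_realfun.measurable_indic _ _ R setT _ (mAw w)) measurableT _ (measurable_set1 k).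
  by rewrite setTI.
move=> _ Y mY; rewrite setTI.
have -> : cA (rect B) @^-1` Y = \big[setU/set0]_(t | `[< Y (Gc t) >])
   \big[setI/setT]_(w : {ffun 'I_N -> bool}) [set x | psi w x = (count_mem w t)%:R].
  apply/seteqP; split => [x /= Yx|].
    rewrite (bigD1 (V x)) /=; last by apply/asboolP; rewrite -c1.
    left; rewrite bigsetIE => w /=; exact: psiE.
  apply: bigsetU_sub => t /asboolP Yt x; rewrite bigsetIE /= => H.
  rewrite c1 (c2 _ t) //.
  rewrite /perm_eq; apply/allP => w _ /=; rewrite -(eqr_nat R) -psiE; apply/eqP; exact: H.
apply: bigsetU_measurable => t _; apply: bigsetI_measurable => w _; exact: mpsi.
Qed.

End IV2.

Section IV3.
Context (R : realType) (d : measure_display) (S : measurableType d).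

Definition Rect (N : nat) : set (set (N.-tuple S)) :=
  [set X | exists B : 'I_N -> set S, (forall i, measurable (B i)) /\ X = rect B].
Arguments Rect : clear implicits.

Lemma rect_measurable N (B : 'I_N -> set S) : (forall i, measurable (B i)) ->
  measurable (rect B).
Proof.
move=> mB; have -> : rect B = \big[setI/setT]_(j : 'I_N) ((fun x : N.-tuple S => tnth x j) @^-1` B j).
  by rewrite bigsetIE.
apply: bigsetI_measurable => j _.
by have := measurable_tnth j measurableT (mB j); rewrite setTI.
Qed.

Lemma measurable_Rect N : @measurable _ (N.-tuple S) = <<s Rect N >>.
Proof.
apply/seteqP; split.
  apply: smallest_sub; first exact: smallest_sigma_algebra.
  apply: bigsetU_sub => i _ _ [Y mY <-].
  apply: sub_sigma_algebra.
  exists (fun j => if j == i then Y else setT); split.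
    by move=> j; case: (j == i).
  apply/seteqP; split => x /=.
    by move=> [_ Yx] j; case: eqP => [->|].
  by move=> H; split => //; have := H i; rewrite eqxx.
apply: smallest_sub; first exact: sigma_algebra_measurable.
by move=> X [B [mB ->]]; exact: rect_measurable.
Qed.

Lemma cA_meas n N (A : set (N.-tuple S)) : (0 < n)%N -> (n <= N)%N ->
  measurable A -> measurable_fun (T := MT R S n N) setT (cA R A).
Proof.
move=> n0 lnN mA.
pose P := fun A : set (N.-tuple S) => measurable_fun (T := MT R S n N) setT (cA R A).
have GP : Rect N `<=` P by move=> X [B [mB ->]]; exact: rect_meas.
apply: (@dynkin_induction _ (N.-tuple S) (Rect N) P (measurable_Rect N)) => //.
- move=> X Y [B [mB ->]] [C [mC ->]]; exists (fun i => B i `&` C i); split.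
    by move=> i; apply: measurableI.
  by apply/seteqP; split => x /=; [move=> [H1 H2] i|move=> H; split => i; have [] := H i].
- apply: GP; exists (fun _ => setT); split => //.
  by apply/seteqP; split.
- move=> X mX PX; rewrite /P.
  have -> : cA R (~` X) = (fun _ => \sum_(p : {perm 'I_N}) (1 : R)) \- cA R X.
    apply: funext => x; rewrite /cA /= -sumrB; apply: eq_bigr => p _.
    by rewrite indicC /= indicE; case: (subtuple p x \in X); rewrite /= ?subrr ?subr0.
  exact: measurable_realfun.measurable_funB.
move=> F mF tF PF; rewrite /P.
apply: (@measurable_realfun.measurable_fun_cvg _ (MT R S n N) R setT (fun m x => \sum_(k < m) cA R (F k) x) (cA R (\bigcup_k F k))).
  move=> m; apply: measurable_sum => k; exact: PF.
move=> x _; apply: cvg_near_cst.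
have HP : forall p : {perm 'I_N}, \forall m \near \oo,
    \sum_(k < m) (\1_(F k) (subtuple p x) : R) = \1_(\bigcup_k F k) (subtuple p x).
  move=> p; set y := subtuple p x.
  have [[k _ Fky]|nU] := pselect ((\bigcup_k F k) y); last first.
    near=> m; rewrite big1 ?indicE ?memNset //.
    by move=> j _; rewrite indicE memNset // => Fj; apply: nU; exists j.
  near=> m.
  have km : (k < m)%N by near: m; exact: nbhs_infty_gt.
  rewrite (bigD1 (Ordinal km)) //= big1 => [|j jk].
    by rewrite addr0 !indicE !mem_set //; exists k.
  rewrite indicE memNset // => Fj; move: jk; rewrite -(inj_eq val_inj) /=.
  have -> : nat_of_ord j = k by apply: tF => //; exists y.
  by rewrite eqxx.
have HA := filter_forall _ HP.
near=> m.
have Hm : forall p : {perm 'I_N}, \sum_(k < m) (\1_(F k) (subtuple p x) : R) =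
   \1_(\bigcup_k F k) (subtuple p x) by near: m; exact: HA.
rewrite /cA exchange_big /=; apply: eq_bigr => p _; exact: Hm.
by rewrite -measurable_Rect.
Unshelve. all: end_near.
Qed.

End IV3.

Theorem lemma3 (R : realType) (d : measure_display) (S : measurableType d)
  (n N : nat) (g : n.-tuple S -> R) (f : N.-tuple S -> R) :
  (n <= N)%N ->
  symmetric_fun f ->
  measurable_fun [set: N.-tuple S] f ->
  [/\ (* (i) *)
      (supnorm (Ustat N g) <= supnorm g)%E,
      (* (ii) *)
      (forall (n1 n2 n3 : nat) (h : n1.-tuple S -> R),
          (n1 <= n2)%N -> (n2 <= n3)%N ->
          Ustat n3 h = Ustat n3 (Ustat n2 h)),
      (* (iii) *)
      (forall N1 N2 : nat, (n <= N1)%N -> (N1 <= N2)%N ->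
          (supnorm (Ustat N2 g) <= supnorm (Ustat N1 g))%E)
    & (* (iv) *)
      ((0 < n)%N ->
       forall B : set R, measurable B ->
         sigma_U R S n N (f @^-1` B))].
Proof.
move=> lnN symf mf; split.
- exact: Ustat_norm.
- by move=> n1 n2 n3 h l12 l23; exact: Ustat_comp.
- by move=> N1 N2 l1 l2; rewrite (Ustat_comp g l1 l2); exact: Ustat_norm.
move=> n0 B mB.
set A := f @^-1` B.
have mA : measurable A by have := mf measurableT B mB; rewrite setTI.
have cAE : cA R A = (fun x => N`!%:R * \1_A x).
  apply: funext => x; rewrite /cA (eq_bigr (fun _ => \1_A x)).
    by rewrite sumr_const card_Sn mulr_natl.
  move=> p _; rewrite !indicE.
  have -> : (subtuple p x \in A) = (x \in A).
    by apply/idP/idP => /set_mem; rewrite /A /preimage /= ?symf => H; apply: mem_set; rewrite /= ?symf.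
  by [].
have nz : (N`!%:R : R) != 0 by rewrite pnatr_eq0 -lt0n fact_gt0.
have m1 : measurable_fun (T := MT R S n N) setT (\1_A : N.-tuple S -> R).
  have -> : (\1_A : N.-tuple S -> R) = (fun x => (N`!%:R)^-1 * cA R A x).
    by apply: funext => x; rewrite cAE mulKf.
  apply: measurable_realfun.measurable_funM => //.
  exact: cA_meas.
exact: ((@measurable_realfun.measurable_indicP _ (MT R S n N) R A).2 m1).
Qed.
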